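(* Let $0<\delta_0<\pi/2$. Then $G(r,t)<\ln(7/6)$ for all $r\in[0,\pi+\delta_0)$ and all $t\ge0$. More precisely, $G(r,t)<\ln\bigl(\tfrac{2r_M\sin r_M}{\pi}\bigr)<\ln(7/6)$, where $r_M\in(\pi/2,\pi)$ is the solution of $r_M=-\tan r_M$.
   Context: Let $f(r)=-\dfrac{r\cos r\sin r}{r+\cos r\sin r}$ and $g(r)=-\dfrac{\cos r\,(r\cos r+\sin r)}{r+\cos r\sin r}$ (extended continuously at $r=0$). Let $F(r,t)$ denote the flow of the one-dimensional vector field $f(r)\partial_r$, i.e.\ the solution of $\partial_tF(r,t)=f(F(r,t))$, $F(r,0)=r$. Define $G(r,t)=\int_0^t g(F(r,s))\,ds$. *)

(* Defs.v *)
From Stdlib Require Import Reals.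
From Coquelicot Require Import Coquelicot.
Open Scope R_scope.

Definition f_vf (r : R) : R :=
  if Req_EM_T r 0 then 0
  else - (r * cos r * sin r) / (r + cos r * sin r).

Definition g_vf (r : R) : R :=
  if Req_EM_T r 0 then -1
  else - (cos r * (r * cos r + sin r)) / (r + cos r * sin r).

Definition is_flow_line (r : R) (u : R -> R) : Prop :=
  u 0 = r /\ forall t : R, is_derive u t (f_vf (u t)).

(* G(r,t) = int_0^t g(F(r,s)) ds along the flow line u = F(r, .). *)
Definition G_along (u : R -> R) (t : R) : R := RInt (fun s => g_vf (u s)) 0 t.

(* Main.v *)
Require Import Defs.
From Stdlib Require Import Reals Lra Psatz.
From Coquelicot Require Import Coquelicot.
Open Scope R_scope.

Ltac numsimp H := unfold sin_approx, cos_approx, sin_term, cos_term in H;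
  cbn [sum_f_R0 Nat.mul Nat.add] in H;
  repeat rewrite fact_simpl in H; repeat rewrite mult_INR in H; cbn [INR pow Factorial.fact] in H.
Lemma cos_half x : cos x = 1 - 2 * sin (x/2) * sin (x/2).
Proof. rewrite <- cos_2a_sin. f_equal. field. Qed.
Lemma hp1 : 0 < sin 2.025 + 2.025 * cos 2.025.
Proof.
  destruct (pre_sin_bound 2.025 2) as [HA _]; try lra.
  destruct (pre_sin_bound (2.025/2) 2) as [HC HB]; try lra.
  rewrite (cos_half 2.025).
  numsimp HA. numsimp HB. numsimp HC. nra. Qed.
Lemma hp2 : sin 2.035 + 2.035 * cos 2.035 < 0.
Proof.
  destruct (pre_sin_bound 2.035 2) as [_ HA]; try lra.
  destruct (pre_sin_bound (2.035/2) 2) as [HB _]; try lra.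
  rewrite (cos_half 2.035).
  numsimp HA. numsimp HB. nra. Qed.
Lemma hp3 : 2.035 * sin 2.025 < 7 * 3.14159 / 12.
Proof.
  destruct (pre_sin_bound 2.025 2) as [_ HA]; try lra.
  numsimp HA. lra. Qed.
Lemma pib : 3.14159 < PI < 3.1416.
Proof. destruct (PI_2_3_7_ineq 2) as [A B]. unfold PI_2_3_7_tg, tg_alt, Ratan_seq in *. simpl in *. lra. Qed.


Definition Sf (x : R) : R := if Req_EM_T x 0 then 1 else sin x / x.

Lemma Sf_mul x : x * Sf x = sin x.
Proof. unfold Sf; destruct (Req_EM_T x 0). subst; rewrite sin_0; ring. field; auto. Qed.

Lemma Sf_cont x : continuous Sf x.
Proof.
  destruct (Req_EM_T x 0) as [->|Hx].
  - apply continuity_pt_filterlim.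
    intros eps Heps.
    destruct (derivable_pt_lim_sin 0 eps Heps) as [d Hd].
    exists d; split; [apply cond_pos|].
    intros y [[_ Hy0] Hyd]. simpl in *. unfold R_dist in *.
    unfold Sf. destruct (Req_EM_T 0 0); [|congruence].
    destruct (Req_EM_T y 0) as [Hy|Hy]. { subst; congruence. }
    specialize (Hd y Hy). rewrite Rminus_0_r in Hyd. specialize (Hd Hyd).
    rewrite cos_0, sin_0, Rplus_0_l, Rminus_0_r in Hd. exact Hd.
  - apply continuous_ext_loc with (g := fun y => sin y * / y).
    + assert (Hp : 0 < Rabs x) by (apply Rabs_pos_lt; auto).
      exists (mkposreal _ Hp). intros y Hy. simpl in Hy.
      unfold ball in Hy; simpl in Hy; unfold AbsRing_ball, abs, minus, plus, opp in Hy; simpl in Hy.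
      unfold Sf. destruct (Req_EM_T y 0) as [->|]; [|reflexivity].
      exfalso. rewrite Rplus_0_l, Rabs_Ropp in Hy. lra.
    + apply (@continuous_mult R_UniformSpace R_AbsRing sin (fun y => / y)).
      * apply continuity_pt_filterlim. apply continuity_sin.
      * apply continuous_Rinv; auto.
Qed.

Lemma cont_mult (f g : R -> R) x : continuous f x -> continuous g x -> continuous (fun y => f y * g y) x.
Proof. intros; apply (@continuous_mult R_UniformSpace R_AbsRing f g); auto. Qed.
Lemma cont_plus (f g : R -> R) x : continuous f x -> continuous g x -> continuous (fun y => f y + g y) x.
Proof. intros; apply (@continuous_plus R_UniformSpace R_AbsRing R_NormedModule f g); auto. Qed.
Lemma cont_opp (f : R -> R) x : continuous f x -> continuous (fun y => - f y) x.
Proof. intros; apply (@continuous_opp R_UniformSpace R_AbsRing R_NormedModule f); auto. Qed.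
Lemma cont_inv (f : R -> R) x : continuous f x -> f x <> 0 -> continuous (fun y => / f y) x.
Proof. intros; apply continuous_Rinv_comp; auto. Qed.
Lemma cont_cos (f : R -> R) x : continuous f x -> continuous (fun y => cos (f y)) x.
Proof. intros; apply (continuous_comp f cos); auto. apply continuity_pt_filterlim, continuity_cos. Qed.
Lemma cont_sin (f : R -> R) x : continuous f x -> continuous (fun y => sin (f y)) x.
Proof. intros; apply (continuous_comp f sin); auto. apply continuity_pt_filterlim, continuity_sin. Qed.
Lemma cont_Sf (f : R -> R) x : continuous f x -> continuous (fun y => Sf (f y)) x.
Proof. intros; apply (continuous_comp f Sf); auto. apply Sf_cont. Qed.

Lemma pos_aux y : 0 < y -> 0 < y + cos y * sin y.
Proof.
  intros Hy. assert (E : cos y * sin y = sin (2*y) / 2) by (rewrite sin_2a; field).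
  rewrite E. destruct (Rlt_le_dec (2*y) PI).
  - assert (0 < sin (2*y)) by (apply sin_gt_0; lra). lra.
  - pose proof (SIN_bound (2*y)). pose proof PI_RGT_0. pose proof pib. lra.
Qed.

Definition D1 x := 1 + cos x * Sf x.

Lemma D1_pos x : 0 < D1 x.
Proof.
  unfold D1, Sf. destruct (Req_EM_T x 0) as [->|Hx]. rewrite cos_0; lra.
  destruct (Rlt_le_dec 0 x).
  - pose proof (pos_aux x r).
    replace (1 + cos x * (sin x / x)) with ((x + cos x * sin x) / x) by (field; auto).
    apply Rdiv_lt_0_compat; auto.
  - assert (x < 0) by lra. pose proof (pos_aux (-x) ltac:(lra)).
    rewrite cos_neg, sin_neg in H0.
    replace (1 + cos x * (sin x / x)) with ((-x + cos x * - sin x) / -x) by (field; auto).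
    apply Rdiv_lt_0_compat; lra.
Qed.

Lemma g_eq x : g_vf x = - cos x * (cos x + Sf x) / D1 x.
Proof.
  pose proof (D1_pos x). unfold g_vf. unfold D1 in *. unfold Sf in *.
  destruct (Req_EM_T x 0) as [->|Hx]. rewrite cos_0; field.
  assert (x + cos x * sin x <> 0).
  { intro E. replace (1 + cos x * (sin x / x)) with ((x + cos x * sin x)/x) in H by (field; auto).
    rewrite E in H. unfold Rdiv in H; rewrite Rmult_0_l in H; lra. }
  field; auto.
Qed.

Lemma f_eq x : f_vf x = - (cos x * sin x) / D1 x.
Proof.
  pose proof (D1_pos x). unfold f_vf. unfold D1 in *. unfold Sf in *.
  destruct (Req_EM_T x 0) as [->|Hx]. rewrite sin_0, cos_0; field.
  assert (x + cos x * sin x <> 0).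
  { intro E. replace (1 + cos x * (sin x / x)) with ((x + cos x * sin x)/x) in H by (field; auto).
    rewrite E in H. unfold Rdiv in H; rewrite Rmult_0_l in H; lra. }
  field; auto.
Qed.

Lemma cont_D1inv (f : R -> R) x : continuous f x -> continuous (fun y => / D1 (f y)) x.
Proof. intros. apply cont_inv. unfold D1. apply cont_plus. apply continuous_const.
  apply cont_mult. apply cont_cos; auto. apply cont_Sf; auto. pose proof (D1_pos (f x)); lra. Qed.

Lemma g_cont (u : R -> R) t : continuous u t -> continuous (fun s => g_vf (u s)) t.
Proof.
  intros Hu. apply continuous_ext with (f := fun s => - cos (u s) * (cos (u s) + Sf (u s)) * / D1 (u s)).
  { intros; rewrite g_eq; reflexivity. }
  apply cont_mult. apply cont_mult. apply cont_opp, cont_cos; auto.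
  apply cont_plus. apply cont_cos; auto. apply cont_Sf; auto. apply cont_D1inv; auto.
Qed.

Lemma der_mult (f g : R -> R) x df dg : is_derive f x df -> is_derive g x dg ->
  is_derive (fun t => f t * g t) x (df * g x + f x * dg).
Proof. intros. apply (is_derive_mult f g); auto. intros; apply Rmult_comm. Qed.
Lemma der_comp (f g : R -> R) x df dg : is_derive f (g x) df -> is_derive g x dg ->
  is_derive (fun t => f (g t)) x (dg * df).
Proof. intros. apply (is_derive_comp f g); auto. Qed.
Lemma der_opp (f : R -> R) x df : is_derive f x df -> is_derive (fun t => - f t) x (- df).
Proof. intros. apply (is_derive_opp f); auto. Qed.

Lemma der_cont (F dF : R -> R) x : is_derive F x (dF x) -> continuous F x.
Proof. intros H. apply (@ex_derive_continuous R_AbsRing R_NormedModule F). eexists; eauto. Qed.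

Lemma mvt_R (F dF : R -> R) a b : (forall z, is_derive F z (dF z)) ->
  exists c, Rmin a b <= c <= Rmax a b /\ F b - F a = dF c * (b - a).
Proof.
  intros H. apply MVT_gen. intros; auto. intros; apply continuity_pt_filterlim.
  apply (der_cont F dF); auto.
Qed.

Lemma RInt_der (m : R -> R) t : (forall s, continuous m s) -> is_derive (fun t => RInt m 0 t) t (m t).
Proof.
  intros Hm. apply (is_derive_RInt m (fun t => RInt m 0 t) 0 t); auto.
  apply filter_forall. intros b. apply (@RInt_correct R_CompleteNormedModule). apply (@ex_RInt_continuous R_CompleteNormedModule). intros; auto.
Qed.

Lemma lin_ode (y m : R -> R) : (forall t, is_derive y t (m t * y t)) -> (forall t, continuous m t) ->
  forall t, y t = y 0 * exp (RInt m 0 t).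
Proof.
  intros Hy Hm t.
  set (M := fun t => RInt m 0 t).
  assert (HM : forall t, is_derive M t (m t)) by (intros; apply RInt_der; auto).
  set (z := fun t => y t * exp (- M t)).
  assert (Hz : forall t, is_derive z t 0).
  { intros s. unfold z.
    replace 0 with (m s * y s * exp (- M s) + y s * (- m s * exp (- M s))) by ring.
    apply (der_mult y (fun t => exp (- M t))); auto. apply (der_comp exp (fun t => - M t) s (exp (- M s)) (- m s)). apply is_derive_exp.
    apply der_opp; auto. }
  destruct (mvt_R z (fun _ => 0) 0 t Hz) as [c [_ Hc]].
  assert (E : z t = z 0) by lra.
  unfold z in E. assert (M0 : M 0 = 0) by (unfold M; rewrite RInt_point; reflexivity).
  rewrite M0, Ropp_0, exp_0, Rmult_1_r in E. fold (M t). rewrite <- E.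
  rewrite Rmult_assoc, <- exp_plus. replace (- M t + M t) with 0 by ring. rewrite exp_0; ring.
Qed.

Lemma flow_cont r u : is_flow_line r u -> forall t, continuous u t.
Proof. intros [_ Hd] t. apply (der_cont u (fun t => f_vf (u t))); auto. Qed.

Lemma flow_sin r u : is_flow_line r u -> forall t, exists E, 0 < E /\ sin (u t) = sin r * E.
Proof.
  intros Hf t. pose proof (flow_cont r u Hf) as Hc. destruct Hf as [H0 Hd].
  set (m := fun s => - cos (u s) * cos (u s) * / D1 (u s)).
  assert (Hy : forall s, is_derive (fun s => sin (u s)) s (m s * sin (u s))).
  { intros s. unfold m. pose proof (D1_pos (u s)).
    replace (- cos (u s) * cos (u s) * / D1 (u s) * sin (u s)) with (f_vf (u s) * cos (u s)).
    apply (der_comp sin u); auto. apply is_derive_sin.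
    rewrite f_eq. field. lra. }
  assert (Hm : forall s, continuous m s).
  { intros s. unfold m. apply cont_mult. apply cont_mult. apply cont_opp, cont_cos; auto. apply cont_cos; auto.
    apply cont_D1inv; auto. }
  pose proof (lin_ode _ _ Hy Hm t) as E. cbv beta in E. rewrite H0 in E. eexists; split; [apply exp_pos|exact E].
Qed.

Lemma flow_cos r u : is_flow_line r u -> forall t, exists E, 0 < E /\ cos (u t) = cos r * E.
Proof.
  intros Hf t. pose proof (flow_cont r u Hf) as Hc. destruct Hf as [H0 Hd].
  set (m := fun s => sin (u s) * sin (u s) * / D1 (u s)).
  assert (Hy : forall s, is_derive (fun s => cos (u s)) s (m s * cos (u s))).
  { intros s. unfold m. pose proof (D1_pos (u s)).
    replace (sin (u s) * sin (u s) * / D1 (u s) * cos (u s)) with (f_vf (u s) * - sin (u s)).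
    apply (der_comp cos u); auto. apply is_derive_cos.
    rewrite f_eq. field. lra. }
  assert (Hm : forall s, continuous m s).
  { intros s. unfold m. apply cont_mult. apply cont_mult. apply cont_sin; auto. apply cont_sin; auto.
    apply cont_D1inv; auto. }
  pose proof (lin_ode _ _ Hy Hm t) as E. cbv beta in E. rewrite H0 in E. eexists; split; [apply exp_pos|exact E].
Qed.

Definition hh x := x * sin x.
Definition dh x := sin x + x * cos x.
Lemma hh_der x : is_derive hh x (dh x).
Proof. unfold hh, dh. auto_derive; auto. ring. Qed.

Lemma flow_h r u : is_flow_line r u -> forall t, hh (u t) = hh r * exp (G_along u t).
Proof.
  intros Hf t. pose proof (flow_cont r u Hf) as Hc. destruct Hf as [H0 Hd].
  assert (Hy : forall s, is_derive (fun s => hh (u s)) s (g_vf (u s) * hh (u s))).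
  { intros s. pose proof (D1_pos (u s)).
    replace (g_vf (u s) * hh (u s)) with (f_vf (u s) * dh (u s)).
    apply (der_comp hh u); auto. apply hh_der.
    rewrite f_eq, g_eq. unfold hh, dh. rewrite <- (Sf_mul (u s)). field. lra. }
  assert (Hm : forall s, continuous (fun s => g_vf (u s)) s) by (intros; apply g_cont; auto).
  pose proof (lin_ode _ _ Hy Hm t) as E. cbv beta in E. rewrite H0 in E. exact E.
Qed.

Lemma G_der u : (forall t, continuous u t) -> forall t, is_derive (G_along u) t (g_vf (u t)).
Proof. intros Hc t. unfold G_along. apply (RInt_der (fun s => g_vf (u s))). intros; apply g_cont; auto. Qed.

Lemma G0 u : G_along u 0 = 0.
Proof. unfold G_along. rewrite RInt_point. reflexivity. Qed.

Lemma confine u a b : (forall t, continuous u t) -> a < u 0 < b ->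
  (forall t, u t <> a /\ u t <> b) -> forall t, a < u t < b.
Proof.
  intros Hc H0 Hn t.
  assert (Hcc : continuity u) by (intros x; apply continuity_pt_filterlim, Hc).
  destruct (Rlt_le_dec a (u t)); destruct (Rlt_le_dec (u t) b); try (split; auto; fail).
  - destruct (IVT_gen u 0 t b Hcc) as [x [_ Hx]].
    { split; [apply Rle_trans with (u 0); [apply Rmin_l|lra] | apply Rle_trans with (u t); [auto|apply Rmax_r]]. }
    destruct (Hn x); congruence.
  - destruct (IVT_gen u 0 t a Hcc) as [x [_ Hx]].
    { split; [apply Rle_trans with (u t); [apply Rmin_r|lra] | apply Rle_trans with (u 0); [lra|apply Rmax_l]]. }
    destruct (Hn x); congruence.
  - lra.
Qed.

Lemma decr_flow r u : is_flow_line r u -> (forall t, f_vf (u t) <= 0) -> forall t, 0 <= t -> u t <= r.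
Proof.
  intros [H0 Hd] Hs t Ht. destruct (mvt_R u (fun t => f_vf (u t)) 0 t Hd) as [c [_ Hc]].
  rewrite H0 in Hc. specialize (Hs c). nra.
Qed.

Lemma incr_flow r u : is_flow_line r u -> (forall t, 0 <= f_vf (u t)) -> forall t, 0 <= t -> r <= u t.
Proof.
  intros [H0 Hd] Hs t Ht. destruct (mvt_R u (fun t => f_vf (u t)) 0 t Hd) as [c [_ Hc]].
  rewrite H0 in Hc. specialize (Hs c). nra.
Qed.

Lemma mvt_le (F dF : R -> R) a b : (forall z, is_derive F z (dF z)) -> a <= b ->
  exists c, a <= c <= b /\ F b - F a = dF c * (b - a).
Proof.
  intros H Hab. destruct (mvt_R F dF a b H) as [c [Hc E]]. exists c. split; auto.
  rewrite Rmin_left, Rmax_right in Hc; auto.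
Qed.

Lemma dh_der x : is_derive dh x (2 * cos x - x * sin x).
Proof. unfold dh. auto_derive; auto. ring. Qed.

Lemma PI_facts : 3.14159 < PI < 3.1416.
Proof. apply pib. Qed.

Lemma dh_decr x y : PI/2 <= x -> x < y -> y <= PI -> dh y < dh x.
Proof.
  intros. destruct (mvt_le dh (fun x => 2 * cos x - x * sin x) x y dh_der) as [c [Hc E]]; [lra|].
  pose proof PI_facts.
  assert (2 * cos c - c * sin c < 0).
  { assert (cos c <= 0) by (apply cos_le_0; lra).
    destruct (Rlt_le_dec c PI).
    - assert (0 < sin c) by (apply sin_gt_0; lra). nra.
    - assert (c = PI) by lra. subst. rewrite cos_PI, sin_PI. lra. }
  nra.
Qed.

Lemma dh_decr_w x y : PI/2 <= x -> x <= y -> y <= PI -> dh y <= dh x.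
Proof. intros. destruct (Req_dec x y). subst; lra. left; apply dh_decr; lra. Qed.

Lemma dh_nonneg_0 x : 0 <= x <= PI/2 -> 0 <= dh x.
Proof.
  intros. pose proof PI_facts. unfold dh.
  assert (0 <= sin x) by (apply sin_ge_0; lra). assert (0 <= cos x) by (apply cos_ge_0; lra). nra.
Qed.

Lemma dh_nonpos_3 x : PI <= x <= 3*(PI/2) -> dh x <= 0.
Proof.
  intros. pose proof PI_facts. unfold dh.
  assert (sin x <= 0) by (apply sin_le_0; lra). assert (cos x <= 0) by (apply cos_le_0; lra). nra.
Qed.

Lemma h_incr_0 x y : 0 <= x -> x <= y -> y <= PI/2 -> hh x <= hh y.
Proof.
  intros. destruct (mvt_le hh dh x y hh_der) as [c [Hc E]]; [lra|].
  pose proof (dh_nonneg_0 c ltac:(lra)). nra.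
Qed.

Lemma h_decr_3 x y : PI <= x -> x <= y -> y <= 3*(PI/2) -> hh y <= hh x.
Proof.
  intros. destruct (mvt_le hh dh x y hh_der) as [c [Hc E]]; [lra|].
  pose proof (dh_nonpos_3 c ltac:(lra)). nra.
Qed.

Lemma h_le_hM rM x : PI/2 < rM < PI -> dh rM = 0 -> PI/2 <= x <= PI -> hh x <= hh rM.
Proof.
  intros HM Hd Hx. destruct (Rle_dec x rM).
  - destruct (mvt_le hh dh x rM hh_der) as [c [Hc E]]; auto.
    pose proof (dh_decr_w c rM ltac:(lra) ltac:(lra) ltac:(lra)). nra.
  - destruct (mvt_le hh dh rM x hh_der) as [c [Hc E]]; [lra|].
    pose proof (dh_decr_w rM c ltac:(lra) ltac:(lra) ltac:(lra)). nra.
Qed.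

Lemma h_decr_after rM x y : PI/2 < rM < PI -> dh rM = 0 -> rM <= x -> x <= y -> y <= PI -> hh y <= hh x.
Proof.
  intros HM Hd ? ? ?. destruct (mvt_le hh dh x y hh_der) as [c [Hc E]]; auto.
  pose proof (dh_decr_w rM c ltac:(lra) ltac:(lra) ltac:(lra)). nra.
Qed.

Lemma hh_half : hh (PI/2) = PI/2.
Proof. unfold hh. rewrite sin_PI2. ring. Qed.

Lemma h_gt_half rM x : PI/2 < rM < PI -> dh rM = 0 -> PI/2 < x <= rM -> PI/2 < hh x.
Proof.
  intros HM Hd Hx. set (m := (PI/2 + x)/2).
  destruct (mvt_le hh dh (PI/2) m hh_der) as [c [Hc E]]; [unfold m; lra|].
  destruct (mvt_le hh dh m x hh_der) as [c' [Hc' E']]; [unfold m; lra|].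
  assert (dh c > 0). { rewrite <- Hd. apply dh_decr; unfold m in *; lra. }
  pose proof (dh_decr_w c' rM ltac:(unfold m in *; lra) ltac:(lra) ltac:(lra)).
  rewrite hh_half in E. unfold m in *. nra.
Qed.

Lemma rM_dh rM : PI/2 < rM < PI -> rM = - tan rM -> dh rM = 0.
Proof.
  intros H E. pose proof PI_facts. assert (cos rM < 0) by (apply cos_lt_0; lra).
  unfold tan in E. unfold dh. assert (E2 : rM * cos rM = - sin rM).
  { apply (f_equal (fun z => z * cos rM)) in E. rewrite E. field. lra. } lra.
Qed.

Lemma rM_bounds rM : PI/2 < rM < PI -> dh rM = 0 -> 2.025 < rM < 2.035.
Proof.
  intros H Hd. pose proof PI_facts. pose proof hp1. pose proof hp2. split.
  - destruct (Rlt_le_dec 2.025 rM); auto. exfalso.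
    destruct (Req_dec rM 2.025). subst. unfold dh in Hd. lra.
    pose proof (dh_decr rM 2.025 ltac:(lra) ltac:(lra) ltac:(lra)). unfold dh in *. lra.
  - destruct (Rlt_le_dec rM 2.035); auto. exfalso.
    destruct (Req_dec rM 2.035). subst. unfold dh in Hd. lra.
    pose proof (dh_decr 2.035 rM ltac:(lra) ltac:(lra) ltac:(lra)). unfold dh in *. lra.
Qed.

Lemma c_bounds rM : PI/2 < rM < PI -> dh rM = 0 -> 1 < 2 * hh rM / PI < 7/6.
Proof.
  intros H Hd. pose proof PI_facts. pose proof (rM_bounds rM H Hd). pose proof hp3.
  pose proof (h_gt_half rM rM H Hd ltac:(lra)).
  assert (sin rM <= sin 2.025) by (apply sin_decr_1; lra).
  assert (0 < sin rM) by (apply sin_gt_0; lra).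
  assert (hh rM < 7 * PI / 12) by (unfold hh; nra).
  split.
  - apply (Rmult_lt_reg_r PI); [lra|]. unfold Rdiv. rewrite Rmult_assoc, Rinv_l; lra.
  - apply (Rmult_lt_reg_r PI); [lra|]. unfold Rdiv. rewrite Rmult_assoc, Rinv_l; lra.
Qed.

Lemma rM_exists : exists rM, PI/2 < rM < PI /\ rM = - tan rM.
Proof.
  pose proof PI_facts. pose proof hp1. pose proof hp2.
  assert (Hc : continuity dh).
  { intros x. apply continuity_pt_filterlim. apply (der_cont dh (fun x => 2 * cos x - x * sin x)). apply dh_der. }
  destruct (IVT_gen dh 2.025 2.035 0 Hc) as [x [Hx E]].
  { unfold dh. rewrite Rmin_right, Rmax_left; lra. }
  rewrite Rmin_left, Rmax_right in Hx by lra.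
  exists x. split. lra.
  assert (cos x < 0) by (apply cos_lt_0; lra).
  unfold tan. unfold dh in E. assert (Es : sin x = - x * cos x) by lra. rewrite Es. field. lra.
Qed.

Lemma exp_le1 x : exp x <= 1 -> x <= 0.
Proof. intros H. destruct (Rle_dec x 0); auto. exfalso. assert (exp 0 < exp x) by (apply exp_increasing; lra). rewrite exp_0 in H0. lra. Qed.

Lemma G_nonpos_of r u t : is_flow_line r u -> 0 < hh r -> hh (u t) <= hh r -> G_along u t <= 0.
Proof.
  intros Hf Hp Hle. pose proof (flow_h r u Hf t) as E. apply exp_le1.
  rewrite E in Hle. nra.
Qed.

Lemma G_nonpos_of_neg r u t : is_flow_line r u -> hh r < 0 -> hh r <= hh (u t) -> G_along u t <= 0.
Proof.
  intros Hf Hp Hle. pose proof (flow_h r u Hf t) as E. apply exp_le1.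
  rewrite E in Hle. nra.
Qed.

Lemma G_const u c : (forall t, u t = c) -> (forall t, continuous u t) -> forall t, G_along u t = g_vf c * t.
Proof.
  intros Hu Hc t. destruct (mvt_R (G_along u) (fun s => g_vf (u s)) 0 t (G_der u Hc)) as [x [_ E]].
  rewrite G0, Hu in E. lra.
Qed.

Lemma g0 : g_vf 0 = -1.
Proof. unfold g_vf. destruct (Req_EM_T 0 0); [reflexivity|congruence]. Qed.

Lemma gPI : g_vf PI = -1.
Proof. unfold g_vf. destruct (Req_EM_T PI 0). pose proof PI_RGT_0; lra. rewrite cos_PI, sin_PI. field. apply PI_neq0. Qed.

Lemma core rM r u t : PI/2 < rM < PI -> dh rM = 0 -> 0 <= r < 3*(PI/2) -> is_flow_line r u -> 0 <= t ->
  G_along u t <= 0 \/ exp (G_along u t) < 2 * hh rM / PI.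
Proof.
  intros HM Hd Hr Hf Ht. pose proof PI_facts.
  pose proof (flow_cont r u Hf) as Hc. pose proof (flow_sin r u Hf) as Hs. pose proof (flow_cos r u Hf) as Hco.
  assert (Hu0 : u 0 = r) by (destruct Hf; auto).
  destruct (Req_dec r 0) as [Hr0|Hr0].
  {
    rewrite Hr0 in *. left.
    assert (Hb : forall s, - (PI/2) < u s < PI/2).
    { apply confine; auto. rewrite Hu0; lra. intros s. destruct (Hco s) as [E [HE HcE]].
      rewrite cos_0 in HcE. split; intro Z; rewrite Z in HcE.
      rewrite cos_neg, cos_PI2 in HcE; lra. rewrite cos_PI2 in HcE; lra. }
    assert (Hz : forall s, u s = 0).
    { intros s. destruct (Hs s) as [E [HE HsE]]. rewrite sin_0 in HsE. specialize (Hb s).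
      apply Rle_antisym; apply sin_incr_0; try lra; rewrite sin_0; lra. }
    rewrite (G_const u 0 Hz Hc t), g0. lra. }
  destruct (Rlt_le_dec r (PI/2)) as [Hr1|Hr1].
  {
    left. assert (0 < sin r) by (apply sin_gt_0; lra). assert (0 < cos r) by (apply cos_gt_0; lra).
    assert (Hb : forall s, 0 < u s < PI/2).
    { apply confine; auto. rewrite Hu0; lra. intros s. destruct (Hco s) as [E [HE HcE]]. destruct (Hs s) as [E' [HE' HsE]].
      split; intro Z; rewrite Z in *. rewrite sin_0 in HsE; nra. rewrite cos_PI2 in HcE; nra. }
    assert (Hdec : forall s, f_vf (u s) <= 0).
    { intros s. rewrite f_eq. pose proof (D1_pos (u s)). specialize (Hb s).
      assert (0 < sin (u s)) by (apply sin_gt_0; lra). assert (0 < cos (u s)) by (apply cos_gt_0; lra).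
      unfold Rdiv. assert (0 < / D1 (u s)) by (apply Rinv_0_lt_compat; lra).
      assert (0 < cos (u s) * sin (u s)) by nra. nra. }
    pose proof (decr_flow r u Hf Hdec t Ht). specialize (Hb t).
    assert (0 < r) by lra. apply (G_nonpos_of r); [exact Hf | unfold hh; nra | apply h_incr_0; lra]. }
  destruct (Req_dec r (PI/2)) as [Hr2|Hr2].
  {
    left. rewrite ?Hr2, ?Hr4 in *.
    assert (Hb : forall s, 0 < u s < PI).
    { apply confine; auto. rewrite Hu0; lra. intros s. destruct (Hs s) as [E' [HE' HsE]]. rewrite sin_PI2 in HsE.
      split; intro Z; rewrite Z in *. rewrite sin_0 in HsE; nra. rewrite sin_PI in HsE; nra. }
    assert (Hz : u t = PI/2).
    { destruct (Hco t) as [E [HE HcE]]. rewrite cos_PI2 in HcE. specialize (Hb t). apply cos_inj; try lra.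
      rewrite cos_PI2; lra. }
    apply (G_nonpos_of (PI/2)); [exact Hf | rewrite hh_half; lra | rewrite Hz; lra]. }
  destruct (Rlt_le_dec r PI) as [Hr3|Hr3].
  {
    assert (0 < sin r) by (apply sin_gt_0; lra). assert (cos r < 0) by (apply cos_lt_0; lra).
    assert (Hb : forall s, PI/2 < u s < PI).
    { apply confine; auto. rewrite Hu0; lra. intros s. destruct (Hco s) as [E [HE HcE]]. destruct (Hs s) as [E' [HE' HsE]].
      split; intro Z; rewrite Z in *. rewrite cos_PI2 in HcE; nra. rewrite sin_PI in HsE; nra. }
    assert (Hinc : forall s, 0 <= f_vf (u s)).
    { intros s. rewrite f_eq. pose proof (D1_pos (u s)). specialize (Hb s).
      assert (0 < sin (u s)) by (apply sin_gt_0; lra). assert (cos (u s) < 0) by (apply cos_lt_0; lra).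
      unfold Rdiv. assert (0 < / D1 (u s)) by (apply Rinv_0_lt_compat; lra).
      assert (cos (u s) * sin (u s) < 0) by nra. nra. }
    pose proof (incr_flow r u Hf Hinc t Ht). specialize (Hb t).
    destruct (Rle_dec r rM) as [HrM|HrM].
    - right. pose proof (h_gt_half rM r HM Hd ltac:(lra)).
      pose proof (h_le_hM rM (u t) HM Hd ltac:(lra)).
      pose proof (flow_h r u Hf t) as E.
      assert (Ex : exp (G_along u t) = hh (u t) / hh r) by (rewrite E; field; lra).
      assert (hM : PI/2 < hh rM) by (apply (h_gt_half rM rM); lra).
      rewrite Ex. apply Rle_lt_trans with (hh rM / hh r).
      { unfold Rdiv. apply Rmult_le_compat_r; auto. left; apply Rinv_0_lt_compat; lra. }
      replace (2 * hh rM / PI) with (hh rM * / (PI/2)) by (field; lra).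
      unfold Rdiv. apply Rmult_lt_compat_l; [lra|]. apply Rinv_lt_contravar; [nra|lra].
    - left. apply (G_nonpos_of r); [exact Hf | unfold hh; nra | apply (h_decr_after rM); lra]. }
  destruct (Req_dec r PI) as [Hr4|Hr4].
  {
    left. rewrite ?Hr2, ?Hr4 in *.
    assert (Hb : forall s, PI/2 < u s < 3*(PI/2)).
    { apply confine; auto. rewrite Hu0; lra. intros s. destruct (Hco s) as [E [HE HcE]]. rewrite cos_PI in HcE.
      split; intro Z; rewrite Z in *. rewrite cos_PI2 in HcE; nra. rewrite cos_3PI2 in HcE; nra. }
    assert (Hz : forall s, u s = PI).
    { intros s. destruct (Hs s) as [E [HE HsE]]. rewrite sin_PI in HsE. specialize (Hb s).
      apply Rle_antisym; apply sin_decr_0; try lra; rewrite sin_PI; lra. }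
    rewrite (G_const u PI Hz Hc t), gPI. lra. }
  {
    left. assert (sin r < 0) by (apply sin_lt_0; lra). assert (cos r < 0) by (apply cos_lt_0; lra).
    assert (Hb : forall s, PI < u s < 3*(PI/2)).
    { apply confine; auto. rewrite Hu0; lra. intros s. destruct (Hco s) as [E [HE HcE]]. destruct (Hs s) as [E' [HE' HsE]].
      split; intro Z; rewrite Z in *. rewrite sin_PI in HsE; nra. rewrite cos_3PI2 in HcE; nra. }
    assert (Hdec : forall s, f_vf (u s) <= 0).
    { intros s. rewrite f_eq. pose proof (D1_pos (u s)). specialize (Hb s).
      assert (sin (u s) < 0) by (apply sin_lt_0; lra). assert (cos (u s) < 0) by (apply cos_lt_0; lra).
      unfold Rdiv. assert (0 < / D1 (u s)) by (apply Rinv_0_lt_compat; lra).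
      assert (0 < cos (u s) * sin (u s)) by nra. nra. }
    pose proof (decr_flow r u Hf Hdec t Ht). specialize (Hb t).
    apply (G_nonpos_of_neg r); [exact Hf | unfold hh; nra | apply h_decr_3; lra]. }
Qed.

Theorem mainTheorem7 (delta0 : R) :
  0 < delta0 < PI / 2 ->
  (exists rM : R, PI / 2 < rM < PI /\ rM = - tan rM) /\
  forall (r : R) (u : R -> R),
    0 <= r < PI + delta0 ->
    is_flow_line r u ->
    forall t : R, 0 <= t ->
      G_along u t < ln (7 / 6) /\
      (forall rM : R, PI / 2 < rM < PI -> rM = - tan rM ->
         G_along u t < ln (2 * rM * sin rM / PI) /\
         ln (2 * rM * sin rM / PI) < ln (7 / 6)).
Proof.
  intros Hd0. split. apply rM_exists.
  intros r u Hr Hf t Ht.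
  assert (Hmain : forall rM : R, PI / 2 < rM < PI -> rM = - tan rM ->
         G_along u t < ln (2 * rM * sin rM / PI) /\ ln (2 * rM * sin rM / PI) < ln (7 / 6)).
  { intros rM HM HT. pose proof (rM_dh rM HM HT) as Hd.
    pose proof (c_bounds rM HM Hd) as Hcb.
    assert (E : 2 * rM * sin rM / PI = 2 * hh rM / PI) by (unfold hh; rewrite <- Rmult_assoc; reflexivity). rewrite E.
    assert (Hl : 0 < ln (2 * hh rM / PI)) by (rewrite <- ln_1; apply ln_increasing; lra).
    split.
    - destruct (core rM r u t HM Hd ltac:(lra) Hf Ht) as [H|H].
      + lra.
      + rewrite <- (ln_exp (G_along u t)). apply ln_increasing; auto. apply exp_pos.
    - apply ln_increasing; lra. }
  split; auto.
  destruct rM_exists as [rM [HM HT]]. destruct (Hmain rM HM HT). lra.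
Qed.
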